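(* Let $R$ be a commutative local ring, $s\in R$, and $A\in M_2(R;s)$. Then ($\det_s(A)\in J(R)$, $tr(A)\in J(R)$ and $A$ is strongly $J$-clean in $M_2(R;s)$) if and only if $A\in J\big(M_2(R;s)\big)$.
   Context: A commutative ring $R$ is local if it has a unique maximal ideal $J(R)$ (its Jacobson radical); $J(T)$ denotes the Jacobson radical of a ring $T$. For a commutative ring $R$ and $s\in R$, $M_2(R;s)$ denotes the ring whose elements are the $2\times 2$ arrays $\left[\begin{smallmatrix} a&b\\ c&d\end{smallmatrix}\right]$ with $a,b,c,d\in R$, with componentwise addition and multiplication $\left[\begin{smallmatrix} a&b\\ c&d\end{smallmatrix}\right]\left[\begin{smallmatrix} a'&b'\\ c'&d'\end{smallmatrix}\right]=\left[\begin{smallmatrix} aa'+s^2bc'&ab'+bd'\\ ca'+dc'&s^2cb'+dd'\end{smallmatrix}\right]$. For $A=\left[\begin{smallmatrix} a&b\\ c&d\end{smallmatrix}\right]$, $\det_s(A)=ad-s^2bc$ and $tr(A)=a+d$. An element $a$ of a ring $T$ is strongly $J$-clean if there is an idempotent $e\in T$ with $ae=ea$ and $a-e\in J(T)$. *)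

(* Defs.v *)
From HB Require Import structures.
From mathcomp Require Import all_boot all_algebra.
From mathcomp Require Import ring.
Set Implicit Arguments. Unset Strict Implicit. Unset Printing Implicit Defensive.
Import GRing.Theory.
Local Open Scope ring_scope.

Definition left_ideal (T : pzRingType) (I : T -> Prop) : Prop :=
  [/\ I 0, (forall x y, I x -> I y -> I (x + y)) & (forall r x, I x -> I (r * x))].

Definition maximal_left_ideal (T : pzRingType) (I : T -> Prop) : Prop :=
  [/\ left_ideal I, ~ I 1 &
      forall K : T -> Prop, left_ideal K -> ~ K 1 ->
        (forall x, I x -> K x) -> forall x, K x -> I x].

Definition jacobson (T : pzRingType) (x : T) : Prop :=
  forall I : T -> Prop, maximal_left_ideal I -> I x.

(* for a commutative ring, left ideals are the ideals; local = unique
   maximal ideal *)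
Definition local_ring (R : comPzRingType) : Prop :=
  exists M : R -> Prop, maximal_left_ideal M /\
    forall N : R -> Prop, maximal_left_ideal N -> forall x, N x <-> M x.

Definition strongly_J_clean (T : pzRingType) (a : T) : Prop :=
  exists e : T, [/\ e * e = e, a * e = e * a & jacobson (a - e)].

Record M2 (R : comNzRingType) (s : R) : Type :=
  Mk2 { m11 : R; m12 : R; m21 : R; m22 : R }.
Arguments Mk2 {R s}.

Section M2ring.
Variables (R : comNzRingType) (s : R).
Local Notation T := (M2 s).

Definition M2_enc (A : T) := (m11 A, m12 A, m21 A, m22 A).
Definition M2_dec (x : R * R * R * R) : T :=
  let: (a, b, c, d) := x in Mk2 a b c d.
Lemma M2_encK : cancel M2_enc M2_dec. Proof. by case. Qed.

HB.instance Definition _ := Choice.copy T (can_type M2_encK).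

Definition M2_zero : T := Mk2 0 0 0 0.
Definition M2_add (A B : T) : T :=
  Mk2 (m11 A + m11 B) (m12 A + m12 B) (m21 A + m21 B) (m22 A + m22 B).
Definition M2_opp (A : T) : T := Mk2 (- m11 A) (- m12 A) (- m21 A) (- m22 A).

Lemma M2_addA : associative M2_add.
Proof. by move=> [????] [????] [????]; rewrite /M2_add /=; congr Mk2; ring. Qed.
Lemma M2_addC : commutative M2_add.
Proof. by move=> [????] [????]; rewrite /M2_add /=; congr Mk2; ring. Qed.
Lemma M2_add0 : left_id M2_zero M2_add.
Proof. by move=> [????]; rewrite /M2_add /=; congr Mk2; ring. Qed.
Lemma M2_addN : left_inverse M2_zero M2_opp M2_add.
Proof. by move=> [????]; rewrite /M2_add /=; congr Mk2; ring. Qed.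

HB.instance Definition _ := GRing.isZmodule.Build T M2_addA M2_addC M2_add0 M2_addN.

Definition M2_one : T := Mk2 1 0 0 1.
(* [a b; c d] [a' b'; c' d'] =
   [aa' + s^2 bc'   ab' + bd'; ca' + dc'   s^2 cb' + dd'] *)
Definition M2_mul (A B : T) : T :=
  Mk2 (m11 A * m11 B + s ^+ 2 * m12 A * m21 B)
      (m11 A * m12 B + m12 A * m22 B)
      (m21 A * m11 B + m22 A * m21 B)
      (s ^+ 2 * m21 A * m12 B + m22 A * m22 B).

Lemma M2_mulA : associative M2_mul.
Proof. by move=> [????] [????] [????]; rewrite /M2_mul /=; congr Mk2; ring. Qed.
Lemma M2_mul1 : left_id M2_one M2_mul.
Proof. by move=> [????]; rewrite /M2_mul /=; congr Mk2; ring. Qed.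
Lemma M2_mulr1 : right_id M2_one M2_mul.
Proof. by move=> [????]; rewrite /M2_mul /=; congr Mk2; ring. Qed.
Lemma M2_mulDl' : left_distributive M2_mul M2_add.
Proof. by move=> [????] [????] [????]; rewrite /M2_mul /M2_add /=; congr Mk2; ring. Qed.
Lemma M2_mulDr' : right_distributive M2_mul M2_add.
Proof. by move=> [????] [????] [????]; rewrite /M2_mul /M2_add /=; congr Mk2; ring. Qed.
Lemma M2_mulDl : left_distributive M2_mul +%R.
Proof. exact: M2_mulDl'. Qed.
Lemma M2_mulDr : right_distributive M2_mul +%R.
Proof. exact: M2_mulDr'. Qed.
Lemma M2_one_neq0 : M2_one != 0.
Proof.
apply/eqP => /(congr1 (@m11 R s)) /= /eqP; by rewrite oner_eq0.
Qed.

HB.instance Definition _ := GRing.Zmodule_isNzRing.Build T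
  M2_mulA M2_mul1 M2_mulr1 M2_mulDl M2_mulDr M2_one_neq0.

End M2ring.

Definition det_s (R : comNzRingType) (s : R) (A : M2 s) : R :=
  m11 A * m22 A - s ^+ 2 * m12 A * m21 A.
Definition tr2 (R : comNzRingType) (s : R) (A : M2 s) : R := m11 A + m22 A.

(* Main.v *)
Require Import Defs.
From mathcomp Require Import all_boot all_algebra.
From mathcomp Require Import ring.
From mathcomp Require classical_sets.
From Stdlib Require Import Classical.
Set Implicit Arguments. Unset Strict Implicit. Unset Printing Implicit Defensive.
Import GRing.Theory.
Local Open Scope ring_scope.

Section Krull.
Variable T : pzRingType.

Lemma krull (K : T -> Prop) : left_ideal K -> ~ K 1 ->
  exists I, maximal_left_ideal I /\ (forall x, K x -> I x).
Proof.
move=> [K0 KD KM] K1.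
pose P := fun B : T -> Prop =>
  left_ideal (fun x => B x \/ K x) /\ ~ (B 1 \/ K 1).
have [A [PA Amax]] : exists A, P A /\ forall B, classical_sets.proper A B -> ~ P B.
  apply: classical_sets.Zorn_bigcup => F FP Ftot.
  rewrite /classical_sets.bigcup /=.
  have big : forall x y, (exists2 X, F X & X x) \/ K x ->
      (exists2 X, F X & X y) \/ K y ->
      exists X, F X /\ (X x \/ K x) /\ (X y \/ K y) \/ (K x /\ K y).
    move=> x y [[X FX Xx]|Kx] [[Y FY Yy]|Ky].
    - have [XY|YX] := Ftot X Y FX FY.
        by exists Y; left; split => //; split; left => //; apply: XY.
      by exists X; left; split => //; split; left => //; apply: YX.
    - by exists X; left; split => //; split; [left|right].
    - by exists Y; left; split => //; split; [right|left].
    - by exists K; right.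
  split; last first.
    move=> [[X FX X1]|//]; by have [_ []] := FP X FX; left.
  split.
  - by right.
  - move=> x y Hx Hy; have [X [[FX [Hx' Hy']]|[Kx Ky]]] := big x y Hx Hy;
      last by right; apply: KD.
    have [[_ XD _] _] := FP X FX.
    by case: (XD x y Hx' Hy') => [Xs|Ks]; [left; exists X|right].
  - move=> r x Hx; have [X [[FX [Hx' _]]|[Kx _]]] := big x x Hx Hx;
      last by right; apply: KM.
    have [[_ _ XM] _] := FP X FX.
    by case: (XM r x Hx') => [Xs|Ks]; [left; exists X|right].
exists (fun x => A x \/ K x); split; last by move=> x Kx; right.
have [AI A1] := PA.
split => // K' HK' K'1 IK' x K'x.
have [sub|nsub] := classic (forall y, K' y -> A y); first by left; apply: sub.
exfalso; apply: (Amax K'); first by split => // y Ay; apply: IK'; left.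
split; last by case.
have eq : forall y, (K' y \/ K y) <-> K' y.
  by move=> y; split => [[//|Ky]|]; [apply: IK'; right|left].
have [H0 HD HM] := HK'.
split; first by left.
- by move=> a b /eq Ha /eq Hb; left; apply: HD.
- by move=> r a /eq Ha; left; apply: HM.
Qed.

Lemma J_unit (x : T) : jacobson x -> forall r, exists u, u * (1 - r * x) = 1.
Proof.
move=> Jx r; apply: NNPP => nu.
pose K := fun y => exists c, y = c * (1 - r * x).
have KI : left_ideal K.
  split; first by exists 0; rewrite mul0r.
  - by move=> a b [c ->] [d ->]; exists (c + d); rewrite mulrDl.
  - by move=> a b [c ->]; exists (a * c); rewrite mulrA.
have K1 : ~ K 1 by move=> [c c1]; apply: nu; exists c.
have [I [Imax KI']] := krull KI K1.
have Imax' := Imax; move: Imax' => [[I0 ID IM] I1 _].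
apply: I1.
have -> : (1 : T) = (1 - r * x) + r * x by rewrite subrK.
apply: ID; first by apply: KI'; exists 1; rewrite mul1r.
by apply: IM; apply: Jx.
Qed.

Lemma unit_J (x : T) : (forall r, exists u, u * (1 - r * x) = 1) -> jacobson x.
Proof.
move=> H I [[I0 ID IM] I1 Imax].
apply: NNPP => nIx.
pose K := fun y => exists i c, I i /\ y = i + c * x.
have KI : left_ideal K.
  split; first by exists 0, 0; rewrite mul0r addr0.
  - move=> a b [i [c [Ii ->]]] [j [d [Ij ->]]]; exists (i + j), (c + d).
    by split; [apply: ID|rewrite mulrDl addrACA].
  - move=> a b [i [c [Ii ->]]]; exists (a * i), (a * c).
    by split; [apply: IM|rewrite mulrDr mulrA].
have [K1|K1] := classic (K 1); last first.
  apply: nIx; apply: (Imax K KI K1); last by exists 0, 1; rewrite add0r mul1r.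
  by move=> y Iy; exists y, 0; rewrite mul0r addr0.
have [i [c [Ii e1]]] := K1.
have [u hu] := H c.
apply: I1; rewrite -hu; apply: IM.
by have -> : 1 - c * x = i by rewrite e1 addrK.
Qed.

End Krull.

Section Main.
Variables (R : comNzRingType) (s : R) (M : R -> Prop).
Hypothesis Mmax : maximal_left_ideal M.
Hypothesis Muniq : forall N : R -> Prop, maximal_left_ideal N -> forall x, N x <-> M x.

Lemma J_M x : jacobson x <-> M x.
Proof. by split => [/(_ M Mmax)//|Mx N HN]; apply/(Muniq HN). Qed.

Lemma M1 : ~ M 1. Proof. by case: Mmax. Qed.
Lemma MD x y : M x -> M y -> M (x + y). Proof. by case: Mmax => [[_ HD _] _ _]; apply: HD. Qed.
Lemma MM r x : M x -> M (r * x). Proof. by case: Mmax => [[_ _ HM] _ _]; apply: HM. Qed.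
Lemma MN x : M x -> M (- x). Proof. by move=> Mx; rewrite -mulN1r; apply: MM. Qed.
Lemma MB x y : M x -> M y -> M (x - y). Proof. by move=> ? ?; apply: MD => //; apply: MN. Qed.
Lemma Mr x r : M x -> M (x * r). Proof. by rewrite mulrC; apply: MM. Qed.

Lemma nM_unit x : ~ M x -> exists y, y * x = 1.
Proof.
move=> nMx; apply: NNPP => nu.
pose K := fun z => exists c, z = c * x.
have KI : left_ideal K.
  split; first by exists 0; rewrite mul0r.
  - by move=> a b [c ->] [d ->]; exists (c + d); rewrite mulrDl.
  - by move=> a b [c ->]; exists (a * c); rewrite mulrA.
have K1 : ~ K 1 by move=> [c c1]; apply: nu; exists c.
have [N [Nmax KN]] := krull KI K1.
by apply: nMx; apply/(Muniq Nmax); apply: KN; exists 1; rewrite mul1r.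
Qed.

Lemma M_1unit x : M x -> exists y, y * (1 - x) = 1.
Proof.
move=> Mx; apply: nM_unit => M1x; apply: M1.
have -> : (1 : R) = (1 - x) + x by rewrite subrK.
by apply: MD.
Qed.

Lemma Mcontra x : (exists y, y * x = 1) -> M x -> False.
Proof. by move=> [y hy] Mx; apply: M1; rewrite -hy; apply: MM. Qed.

Local Notation T := (M2 s).

Lemma cancel_unit (x u v : R) : u * x = 1 -> x * v = 0 -> v = 0.
Proof. by move=> hu hv; rewrite -[v]mul1r -hu -mulrA hv mulr0. Qed.

Lemma entries (A : T) : jacobson A ->
  [/\ M (m11 A), M (m22 A), M (s ^+ 2 * m12 A) & M (s ^+ 2 * m21 A)].
Proof.
move=> JA; have H := J_unit JA.
case: A JA H => a b c d /= JA H.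
have one0 : (1 : R) <> 0 by apply/eqP; rewrite oner_eq0.
split; apply: NNPP => /nM_unit [y hy].
- have [U hU] := H (Mk2 y 0 0 0).
  move: (congr1 (@m11 R s) hU); case: U {hU} => u1 u2 u3 u4 /=.
  move=> e; apply: one0; rewrite -e /=.
  ring: hy.
- have [U hU] := H (Mk2 0 0 0 y).
  move: (congr1 (@m22 R s) hU); case: U {hU} => u1 u2 u3 u4 /=.
  move=> e; apply: one0; rewrite -e /=.
  ring: hy.
- have [U hU] := H (Mk2 0 0 y 0).
  move: (congr1 (@m22 R s) hU); case: U {hU} => u1 u2 u3 u4 /=.
  move=> e; apply: one0; rewrite -e /=.
  ring: hy.
- have [U hU] := H (Mk2 0 y 0 0).
  move: (congr1 (@m11 R s) hU); case: U {hU} => u1 u2 u3 u4 /=.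
  move=> e; apply: one0; rewrite -e /=.
  ring: hy.
Qed.


Lemma main (A : T) :
  (jacobson (det_s A) /\ jacobson (tr2 A) /\ strongly_J_clean A) <-> jacobson A.
Proof.
split; last first.
  move=> JA; have [h1 h2 h3 h4] := entries JA.
  split; [apply/J_M | split; [apply/J_M | exists 0]].
  - move: h1 h2 h3 h4; case: A {JA} => a b c d /= h1 h2 h3 h4; rewrite /det_s /=.
    by apply: MB; apply: Mr.
  - by move: h1 h2 h3 h4; case: A {JA} => a b c d /= h1 h2 _ _; rewrite /tr2 /=; apply: MD.
  - by rewrite mulr0 mul0r subr0 mulr0.
move=> [/J_M Md [/J_M Mt [e [ee _ JAe]]]].
have [h1 h2 h3 h4] := entries JAe.
move: e ee JAe h1 h2 h3 h4 Md Mt; case: A => a b c d [p q r w] ee JAe /= h1 h2 h3 h4.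
rewrite /det_s /tr2 /= => Md Mt.
have E1 := congr1 (@m11 R s) ee; have E2 := congr1 (@m12 R s) ee.
have E3 := congr1 (@m21 R s) ee; have E4 := congr1 (@m22 R s) ee.
rewrite /= in E1 E2 E3 E4.
have Mtr : M (p + w).
  have -> : p + w = (a + d) - (a - p) - (d - w) by ring.
  by apply: MB; [apply: MB|].
have Mdl : M (p * w - s ^+ 2 * q * r).
  have -> : p * w - s ^+ 2 * q * r = (a * d - s ^+ 2 * b * c)
     - ((a - p) * d + (d - w) * p - (s ^+ 2 * (b - q)) * c - (s ^+ 2 * (c - r)) * q)
     by ring.
  by apply: MB => //; apply: MB; [apply: MB; [apply: MD|]|]; apply: Mr.
have [y hy] : exists y : R, y * (1 - (p + w)) = 1 := M_1unit Mtr.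
have q0 : q = 0.
  apply: (cancel_unit hy).
  have -> : (1 - (p + w)) * q = q - (p * q + q * w) by ring.
  by rewrite E2 subrr.
have r0 : r = 0.
  apply: (cancel_unit hy).
  have -> : (1 - (p + w)) * r = r - (r * p + w * r) by ring.
  by rewrite E3 subrr.
subst q r.
have Mp : M p.
  have Ep : p = y * ((1 - (p + w)) * p) by rewrite mulrA hy mul1r.
  rewrite {1}Ep.
  have -> : (1 - (p + w)) * p = - (p * w - s ^+ 2 * 0 * 0) + (p - (p * p + s ^+ 2 * 0 * 0)) by ring.
  by rewrite E1 subrr addr0; apply: MM; apply: MN.
have Mw : M w.
  have Ew : w = y * ((1 - (p + w)) * w) by rewrite mulrA hy mul1r.
  rewrite {1}Ew.
  have -> : (1 - (p + w)) * w = - (p * w - s ^+ 2 * 0 * 0) + (w - (s ^+ 2 * 0 * 0 + w * w)) by ring.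
  by rewrite E4 subrr addr0; apply: MM; apply: MN.
have [z1 hz1] : exists y : R, y * (1 - p) = 1 := M_1unit Mp.
have [z2 hz2] : exists y : R, y * (1 - w) = 1 := M_1unit Mw.
have p0 : p = 0.
  apply: (cancel_unit hz1).
  have -> : (1 - p) * p = p - (p * p + s ^+ 2 * 0 * 0) by ring.
  by rewrite E1 subrr.
have w0 : w = 0.
  apply: (cancel_unit hz2).
  have -> : (1 - w) * w = w - (s ^+ 2 * 0 * 0 + w * w) by ring.
  by rewrite E4 subrr.
subst p w.
have e0 : (Mk2 0 0 0 0 : T) = 0 by [].
by rewrite e0 subr0 in JAe.
Qed.

End Main.

Theorem proposition3p3 (R : comNzRingType) (s : R) (A : M2 s) :
  local_ring R ->
  ((jacobson (det_s A) /\ jacobson (tr2 A) /\ strongly_J_clean A) <->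
   jacobson A).
Proof. move=> [M [Mmax Muniq]]; exact: (@main R s M Mmax Muniq A). Qed.
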